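(* For every real number $x$, \[ \arctan(x)=-2\sum_{m=1}^{\infty}\sum_{n=1}^{2m-1}\frac{(-1)^{n}}{(2m-1)\left(1+x^{2}/4\right)^{2m-1}}\left(\frac{x}{2}\right)^{2(2m-n)-1}\binom{2m-1}{2n-1}. \] *)

(* Defs.v *)
From Stdlib Require Export Reals.
Open Scope R_scope.

(* Binomial coefficient on naturals via Pascal's rule; binom n k = 0 for k > n,
   as in the usual combinatorial convention. (Stdlib's real-valued [C n k] uses
   truncated subtraction and is NOT zero for k > n, so we do not use it.) *)
Fixpoint binom (n k : nat) : nat :=
  match n, k with
  | _, O => 1%nat
  | O, S _ => 0%nat
  | S n', S k' => (binom n' k' + binom n' (S k'))%nat
  end.

Definition atan_term (x : R) (m n : nat) : R :=
  (-1) ^ n / (INR (2 * m - 1) * (1 + x ^ 2 / 4) ^ (2 * m - 1))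
  * (x / 2) ^ (2 * (2 * m - n) - 1)
  * INR (binom (2 * m - 1) (2 * n - 1)).

(* Inner finite sum over n = 1 .. 2m-1 (for m >= 1; sum_f_R0 f N has N+1 terms). *)
Definition atan_inner (x : R) (m : nat) : R :=
  sum_f_R0 (fun j => atan_term x m (S j)) (2 * m - 2).

(* Main.v *)
Require Import Defs.
From Stdlib Require Import Reals Lra Lia.
From Coquelicot Require Import Coquelicot.
Open Scope R_scope.


Lemma binom_gt : forall n k, (n < k)%nat -> binom n k = 0%nat.
Proof.
  induction n; intros k H; destruct k; simpl; try lia; auto.
  rewrite !IHn; lia.
Qed.

Lemma sum_shift : forall f n, sum_f_R0 f (S n) = f 0%nat + sum_f_R0 (fun j => f (S j)) n.
Proof.
  intros f n; induction n; simpl in *. ring. rewrite IHn; ring.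
Qed.

Lemma sum_ext : forall f g n, (forall j, (j <= n)%nat -> f j = g j) -> sum_f_R0 f n = sum_f_R0 g n.
Proof. intros; apply sum_eq; auto. Qed.

Section Bin.
Variable y : R.
Definition Pr n := sum_f_R0 (fun j => (-1)^j * INR (binom n (2*j)) * y^(n-2*j)) n.
Definition Qr n := sum_f_R0 (fun j => (-1)^j * INR (binom n (2*j+1)) * y^(n-2*j-1)) n.

Lemma Qr_S n : Qr (S n) = Pr n + y * Qr n.
Proof.
  unfold Qr, Pr. rewrite tech5, (binom_gt (S n) (2 * S n + 1)) by lia.
  simpl INR at 2. rewrite Rmult_0_r, Rmult_0_l, Rplus_0_r.
  rewrite scal_sum, <- sum_plus.
  apply sum_ext. intros j Hj.
  replace (2*j+1)%nat with (S (2*j)) by lia. cbn [binom]. rewrite plus_INR.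
  assert (e1: (S n - 2*j - 1 = n - 2*j)%nat) by lia. rewrite e1.
  destruct (Compare_dec.le_lt_dec (S (2*j)) n).
  - assert (e2: y^(n-2*j) = y^(n-2*j - 1) * y).
    { replace (n-2*j)%nat with (S (n-2*j-1)) at 1 by lia. simpl; ring. }
    rewrite e2. ring.
  - rewrite (binom_gt n (S (2*j))) by lia. simpl INR. ring.
Qed.

Lemma Pr_S n : Pr (S n) = y * Pr n - Qr n.
Proof.
  unfold Pr, Qr. rewrite sum_shift.
  assert (E: sum_f_R0 (fun j => (-1) ^ S j * INR (binom (S n) (2 * S j)) * y ^ (S n - 2 * S j)) n
     = sum_f_R0 (fun j => (-1) ^ S j * INR (binom n (2 * S j)) * y ^ (S n - 2 * S j)) n
       - sum_f_R0 (fun j => (-1) ^ j * INR (binom n (2 * j + 1)) * y ^ (n - 2 * j - 1)) n).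
  { rewrite <- minus_sum. apply sum_ext; intros j Hj.
    replace (2 * S j)%nat with (S (S (2*j))) by lia. cbn [binom].
    replace (2*j+1)%nat with (S (2*j)) by lia.
    rewrite plus_INR.
    replace (S n - S (S (2 * j)))%nat with (n - S (2*j))%nat by lia.
    replace (n - 2 * j - 1)%nat with (n - S (2*j))%nat by lia. simpl pow. ring. }
  rewrite E. clear E.
  assert (E2: sum_f_R0 (fun j => (-1) ^ j * INR (binom n (2 * j)) * y ^ (n - 2 * j)) n
     = sum_f_R0 (fun j => (-1) ^ j * INR (binom n (2 * j)) * y ^ (n - 2 * j)) (S n)).
  { rewrite tech5, (binom_gt n (2 * S n)) by lia. simpl INR. ring. }
  rewrite E2, sum_shift. clear E2.
  rewrite Rmult_plus_distr_l, scal_sum.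
  replace (sum_f_R0 (fun j => (-1) ^ S j * INR (binom n (2 * S j)) * y ^ (S n - 2 * S j)) n)
   with (sum_f_R0 (fun i => (-1) ^ S i * INR (binom n (2 * S i)) * y ^ (n - 2 * S i) * y) n).
  - replace (S n - 2 * 0)%nat with (S n) by lia. replace (n - 2 * 0)%nat with n by lia.
    cbn [binom]. replace (2*0)%nat with 0%nat by lia. destruct n; cbn [binom]; simpl pow; simpl INR; ring.
  - apply sum_ext; intros j Hj.
    destruct (Compare_dec.le_lt_dec (2 * S j) n).
    + replace (S n - 2 * S j)%nat with (S (n - 2 * S j)) by lia. simpl pow; ring.
    + rewrite (binom_gt n (2 * S j)) by lia. simpl INR; ring.
Qed.

Lemma Cpow_PQ n : Cpow (y, 1) n = (Pr n, Qr n).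
Proof.
  induction n.
  - unfold Pr, Qr. simpl. unfold RtoC. f_equal; ring.
  - rewrite Cpow_S, IHn, Pr_S, Qr_S. unfold Cmult. simpl. f_equal; ring.
Qed.
End Bin.

Lemma Im_plus (u v : C) : Im (u + v)%C = Im u + Im v.
Proof. destruct u, v; reflexivity. Qed.
Lemma Im_RtoC_mult (r : R) (c : C) : Im (RtoC r * c)%C = r * Im c.
Proof. destruct c; simpl; ring. Qed.
Lemma Rabs_Im_le (c : C) : Rabs (Im c) <= Cmod c.
Proof. eapply Rle_trans; [apply Rmax_r | apply Rmax_Cmod]. Qed.

Section An.
Variable w : C.
Let b := Im w.
Let r2 := Re w ^ 2 + Im w ^ 2.
Hypothesis Hr2 : r2 < 1.

Lemma Cmod_w2 : Cmod w ^ 2 = r2.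
Proof. unfold r2; apply Cmod2_alt. Qed.
Lemma r2_ge0 : 0 <= r2.
Proof. unfold r2; nra. Qed.

Definition q k := Im (Cpow w (2*k+1)).
Definition F n t := sum_f_R0 (fun k => t^(2*k+1) * q k / INR (2*k+1)) n.
Definition F' n t := sum_f_R0 (fun k => t^(2*k) * q k) n.
Definition u t := 2*t*b/(1 - t^2*r2).
Definition G t := /2 * atan (u t).
Definition zz t := (RtoC (t^2) * Cpow w 2)%C.

Lemma dterm k c t : derivable_pt_lim (fun t => t^(2*k+1) * c / INR (2*k+1)) t (t^(2*k)*c).
Proof.
  replace (2*k+1)%nat with (S (2*k)) by lia. generalize (2*k)%nat. intros m.
  apply is_derive_Reals. auto_derive; auto. change (match m with 0%nat => 1 | S _ => INR m + 1 end) with (INR (S m)).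
  field. apply not_0_INR; lia.
Qed.

Lemma dF n t : derivable_pt_lim (F n) t (F' n t).
Proof.
  induction n.
  - unfold F, F'. cbn [sum_f_R0]. apply dterm.
  - unfold F, F'. cbn [sum_f_R0]. apply derivable_pt_lim_plus. apply IHn.
    apply dterm.
Qed.

Lemma zz_mod t : Rabs t <= 1 -> Cmod (zz t) <= r2.
Proof.
  intros Ht. unfold zz. rewrite Cmod_mult, Cmod_R, Cmod_pow, Cmod_w2.
  rewrite <- RPow_abs. pose proof r2_ge0. pose proof (Rabs_pos t).
  replace r2 with (1 * r2) at 2 by ring. apply Rmult_le_compat_r; auto. nra.
Qed.

Lemma one_minus_zz t : Rabs t <= 1 -> 1 - r2 <= Cmod (1 - zz t)%C.
Proof.
  intros Ht. pose proof (zz_mod t Ht).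
  pose proof (Cmod_triangle (1 - zz t)%C (zz t)).
  replace (1 - zz t + zz t)%C with (RtoC 1) in H0 by ring.
  rewrite Cmod_1 in H0. lra.
Qed.

Lemma zz_neq1 t : Rabs t <= 1 -> (1 - zz t)%C <> RtoC 0.
Proof.
  intros Ht E. pose proof (one_minus_zz t Ht). rewrite E, Cmod_0 in H. lra.
Qed.

Lemma F'_geom n t : Rabs t <= 1 -> F' n t = Im (w * (1 - Cpow (zz t) (S n)) / (1 - zz t))%C.
Proof.
  intros Ht. pose proof (zz_neq1 t Ht).
  assert (Hk : forall k, t^(2*k) * q k = Im (w * Cpow (zz t) k)%C).
  { intros k. unfold q, zz. rewrite Cpow_mult_l, <- RtoC_pow, <- pow_mult.
    rewrite <- Cpow_mult_r. replace (2*k+1)%nat with (S (2*k)) by lia. rewrite Cpow_S.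
    rewrite <- Im_RtoC_mult. f_equal. ring. }
  induction n.
  - unfold F'. cbn [sum_f_R0]. rewrite Hk. f_equal. simpl Cpow. field. auto.
  - unfold F' in *. cbn [sum_f_R0]. rewrite IHn, Hk, <- Im_plus. f_equal.
    rewrite (Cpow_S _ (S n)). field. auto.
Qed.

Lemma G'_eq t : Rabs t <= 1 -> b*(1+t^2*r2)/((1-t^2*r2)^2+4*t^2*b^2) = Im (w / (1 - zz t))%C.
Proof.
  intros Ht. pose proof (zz_neq1 t Ht).
  unfold zz, b, r2 in *. destruct w as [a b'].
  unfold Cdiv, Cminus, Cmult, Cinv, Copp, Cplus, RtoC in *; simpl in *.
  assert (Ht2: t*(t*1) <= 1). { unfold Rabs in Ht; destruct (Rcase_abs t); nra. }
  assert (Hp: 0 < 1 - t*(t*1)*(a*(a*1)+b'*(b'*1))).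
  { assert (0 <= t*(t*1)) by nra. assert (0 <= a*(a*1)+b'*(b'*1)) by nra. nra. }
  assert (HD: 0 < (1 - t*(t*1)*(a*(a*1)+b'*(b'*1)))^2 + 4*(t*(t*1))*(b'*(b'*1))).
  { assert (0 <= t*(t*1)) by nra. assert (0 <= b'*(b'*1)) by nra. nra. }
  field. apply Rgt_not_eq. apply Rlt_gt. eapply Rlt_le_trans; [exact HD | right; ring].
Qed.

Lemma t2_le t : Rabs t <= 1 -> t^2 <= 1.
Proof. intros Ht. unfold Rabs in Ht; destruct (Rcase_abs t); nra. Qed.

Lemma p_pos t : Rabs t <= 1 -> 0 < 1 - t^2*r2.
Proof. intros Ht. pose proof (t2_le t Ht). pose proof r2_ge0. assert (0 <= t^2) by nra. nra. Qed.

Lemma dG t : Rabs t <= 1 -> derivable_pt_lim G t (Im (w / (1 - zz t))%C).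
Proof.
  intros Ht. rewrite <- G'_eq by auto. pose proof (p_pos t Ht) as Hp.
  assert (Hu: derivable_pt_lim u t (2*b*(1+t^2*r2)/(1-t^2*r2)^2)).
  { apply is_derive_Reals. unfold u. auto_derive.
    - simpl in Hp. lra.
    - simpl in *. field. lra. }
  assert (H1: 0 < 1 + u t ^2) by (pose proof (pow2_ge_0 (u t)); lra).
  replace (b * (1 + t ^ 2 * r2) / ((1 - t ^ 2 * r2) ^ 2 + 4 * t ^ 2 * b ^ 2))
    with (/2 * (/ (1 + u t ^ 2) * (2*b*(1+t^2*r2)/(1-t^2*r2)^2))).
  - apply (derivable_pt_lim_scal (comp atan u)). apply (derivable_pt_lim_comp u atan). exact Hu.
    apply derivable_pt_lim_atan.
  - unfold u in *. field. split; [|lra].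
    assert (0 < (1 - t ^ 2 * r2) ^ 2) by (apply pow_lt; lra).
    assert (0 <= 4 * t ^ 2 * b ^ 2) by (pose proof (pow2_ge_0 t); pose proof (pow2_ge_0 b); nra). lra.
Qed.

Lemma div_le_aux X Y A B : 0 <= X -> X <= A -> 0 < B -> B <= Y -> X / Y <= A / B.
Proof.
  intros. apply Rle_trans with (X / B).
  - unfold Rdiv. apply Rmult_le_compat_l; auto. apply Rinv_le_contravar; auto.
  - unfold Rdiv. apply Rmult_le_compat_r; auto. left; apply Rinv_0_lt_compat; auto.
Qed.

Lemma Im_opp c : Im (- c)%C = - Im c.
Proof. destruct c; reflexivity. Qed.

Lemma err_bound n t : Rabs t <= 1 -> Rabs (F' n t - Im (w / (1 - zz t))%C) <= r2^(S n)/(1-r2).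
Proof.
  intros Ht. pose proof (zz_neq1 t Ht) as Hz. rewrite F'_geom by auto.
  replace (Im (w * (1 - zz t ^ S n) / (1 - zz t))%C - Im (w / (1 - zz t))%C)
    with (Im (- (w * zz t ^ S n / (1 - zz t)))%C).
  2: { rewrite Im_opp. replace (w * zz t ^ S n / (1 - zz t))%C with (- (w * (1 - zz t ^ S n) / (1 - zz t) + - (w / (1 - zz t))))%C by (field; auto). rewrite Im_opp, Im_plus, Im_opp. ring. }
  eapply Rle_trans. apply Rabs_Im_le. rewrite Cmod_opp, Cmod_div by auto.
  rewrite Cmod_mult, Cmod_pow.
  pose proof (Cmod_ge_0 w). pose proof (Cmod_ge_0 (zz t)). pose proof Cmod_w2.
  assert (Hw: Cmod w <= 1) by nra.
  apply div_le_aux.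
  - apply Rmult_le_pos; auto. apply pow_le; auto.
  - rewrite <- (Rmult_1_l (r2 ^ S n)). apply Rmult_le_compat; auto. apply pow_le; auto.
    apply pow_incr. split; auto. apply zz_mod; auto.
  - lra.
  - apply one_minus_zz; auto.
Qed.

Lemma F0 n : F n 0 = 0.
Proof.
  induction n; unfold F in *; cbn [sum_f_R0].
  - rewrite pow_i by lia. unfold Rdiv; ring.
  - rewrite IHn, pow_i by lia. unfold Rdiv; ring.
Qed.

Lemma G0 : G 0 = 0.
Proof. unfold G, u. replace (2 * 0 * b / (1 - 0 ^ 2 * r2)) with 0. rewrite atan_0; ring.
  unfold Rdiv; ring. Qed.

Lemma main_cv : Un_cv (fun n => sum_f_R0 (fun k => q k / INR (2*k+1)) n) (G 1).
Proof.
  intros eps Heps. pose proof r2_ge0.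
  destruct (pow_lt_1_zero r2) with (y := eps * (1 - r2)) as [N HN].
  { rewrite Rabs_right; lra. }
  { apply Rmult_lt_0_compat; lra. }
  exists N. intros n Hn. unfold R_dist.
  assert (HF: sum_f_R0 (fun k => q k / INR (2*k+1)) n = F n 1).
  { unfold F. apply sum_eq. intros. rewrite pow1, Rmult_1_l. reflexivity. }
  rewrite HF.
  pose proof (bounded_variation (fun t => F n t - G t) (fun t => F' n t - Im (w / (1 - zz t))%C)
     (r2^(S n)/(1-r2)) 0 1) as HB.
  assert (HB' : Rabs (F n 1 - G 1 - (F n 0 - G 0)) <= r2 ^ S n / (1 - r2) * Rabs (1 - 0)).
  { apply HB. intros t Ht. rewrite Rminus_0_r, Rminus_0_r, Rabs_R1 in Ht. split.
    - apply is_derive_Reals. apply derivable_pt_lim_minus. apply dF. apply dG; auto.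
    - apply err_bound; auto. }
  rewrite F0, G0, !Rminus_0_r in HB'. rewrite (Rabs_pos_eq 1), Rmult_1_r in HB' by lra.
  eapply Rle_lt_trans. exact HB'.
  specialize (HN (S n) ltac:(lia)). rewrite Rabs_right in HN by (apply Rle_ge, pow_le; lra).
  apply Rmult_lt_reg_r with (1 - r2). lra. unfold Rdiv. rewrite Rmult_assoc, Rinv_l by lra. lra.
Qed.
End An.

Lemma inner_eq x k : let y := x/2 in let s := 1 + y^2 in
  atan_inner x (S k) = - ((y/s)^(2*k+1) * Qr y (2*k+1)) / INR (2*k+1).
Proof.
  intros y s.
  assert (Hs : 0 < s) by (unfold s; pose proof (pow2_ge_0 y); lra).
  assert (HN : INR (2*k+1) <> 0) by (apply not_0_INR; lia).
  unfold atan_inner. replace (2 * S k - 2)%nat with (2*k)%nat by lia.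
  unfold Qr. replace (2*k+1)%nat with (S (2*k)) at 2 by lia. rewrite tech5.
  rewrite (binom_gt (2*k+1) (2 * S (2*k) + 1)) by lia. simpl INR at 2.
  rewrite Rmult_0_r, Rmult_0_l, Rplus_0_r.
  transitivity (sum_f_R0 (fun j => (-1) ^ j * INR (binom (2 * k + 1) (2 * j + 1)) * y ^ (2 * k + 1 - 2 * j - 1)
     * (- (y/s)^(2*k+1) / INR (2*k+1))) (2*k)).
  2: { rewrite <- scal_sum. field. auto. }
  apply sum_eq. intros j Hj. unfold atan_term.
  replace (2 * S k - 1)%nat with (2*k+1)%nat by lia.
  replace (2 * S j - 1)%nat with (2*j+1)%nat by lia.
  replace (2 * (2 * S k - S j) - 1)%nat with (4*k+1-2*j)%nat by lia.
  replace (x/2) with y by reflexivity.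
  replace (1 + x^2/4) with s by (unfold s, y; field).
  destruct (Compare_dec.le_lt_dec j k).
  - replace (4*k+1-2*j)%nat with (2*k+1 + (2*k+1-2*j-1))%nat by lia.
    rewrite (pow_add y). unfold Rdiv. rewrite Rpow_mult_distr, pow_inv.
    simpl pow at 1. field. split; auto. apply pow_nonzero; lra.
  - rewrite (binom_gt (2*k+1) (2*j+1)) by lia. simpl INR. ring.
Qed.

Lemma sum_neg f n : sum_f_R0 (fun k => - f k) n = - sum_f_R0 f n.
Proof. induction n; simpl; [ring | rewrite IHn; ring]. Qed.

Theorem mainTheorem2 : forall x : R,
  exists l : R, infinite_sum (fun k : nat => atan_inner x (S k)) l /\ atan x = -2 * l.
Proof.
  intros x.
  set (y := x/2). set (s := 1 + y^2).
  assert (Hs : 0 < s) by (unfold s; pose proof (pow2_ge_0 y); lra).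
  set (w := (RtoC (y/s) * (y, 1))%C).
  assert (Hre : Re w = y*y/s) by (unfold w; simpl; field; lra).
  assert (Him : Im w = y/s) by (unfold w; simpl; field; lra).
  assert (Hr2 : Re w ^ 2 + Im w ^ 2 < 1).
  { rewrite Hre, Him. replace ((y*y/s)^2 + (y/s)^2) with (y^2/s) by (unfold s; field; nra).
    apply Rmult_lt_reg_r with s; auto. unfold Rdiv. rewrite Rmult_assoc, Rinv_l by lra.
    unfold s; lra. }
  exists (- G w 1). split.
  - intros eps Heps. destruct (main_cv w Hr2 eps Heps) as [N HN]. exists N. intros n Hn.
    specialize (HN n Hn). unfold R_dist in *.
    replace (sum_f_R0 (fun k => atan_inner x (S k)) n)
      with (- sum_f_R0 (fun k => q w k / INR (2 * k + 1)) n).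
    + rewrite <- Rabs_Ropp. replace (- (- sum_f_R0 (fun k => q w k / INR (2 * k + 1)) n - - G w 1))
        with (sum_f_R0 (fun k => q w k / INR (2 * k + 1)) n - G w 1) by ring. auto.
    + rewrite <- sum_neg. apply sum_eq. intros k _. rewrite inner_eq. fold y s.
      unfold q. unfold w. rewrite Cpow_mult_l, <- RtoC_pow, Cpow_PQ, Im_RtoC_mult. simpl Im.
      replace (k + (k + 0) + 1)%nat with (2*k+1)%nat by lia. unfold Rdiv. ring.
  - unfold G, u. replace (2 * 1 * Im w / (1 - 1 ^ 2 * (Re w ^ 2 + Im w ^ 2))) with x.
    { lra. }
    rewrite Hre, Him. unfold s, y. field. split.
    + pose proof (pow2_ge_0 x). lra.
    + intro E. pose proof (pow2_ge_0 x). nra.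
Qed.
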